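(* Let $\mathfrak g$ be of type $A_n$, $i\in I$ and $b\in\mathcal B(\infty)$. If $m_i^\ast(b)=1$, then for $1\le s\le i$, $\Sigma^\ast_s(\widetilde f_i^\ast(b))=\Sigma^\ast_s(b)+1$ if $s=1$ and $\Sigma^\ast_s(\widetilde f_i^\ast(b))=\Sigma^\ast_s(b)$ otherwise. If $m_i^\ast(b)=k$ for some $k\ge2$, then $\Sigma^\ast_s(\widetilde f_i^\ast(b))$ equals $\Sigma^\ast_s(b)+2$ if $s<k$, $\Sigma^\ast_s(b)+1$ if $s=k$, and $\Sigma^\ast_s(b)$ if $s>k$. In particular $\Sigma^\ast_k(\widetilde f_i^\ast(b))=\Sigma^\ast_k(b)+1$ for $k=m_i^\ast(b)$.
   Context: $I=\{1,\dots,n\}$. $\mathcal I=\{(s,t)\in\mathbb Z_{>0}\times I:s+t\le n+1\}$; $\mathcal B(\infty)$ is the set of $b=(b_{s,t})_{(s,t)\in\mathcal I}\in\mathbb Z_{\ge0}^{\mathcal I}$ with $b_{1,k}\ge b_{2,k-1}\ge\dots\ge b_{k,1}$ for $1\le k\le n$. Convention: $b_{s,t}=0$, $\mathbf e_{s,t}=0$ for $(s,t)\notin\mathcal I$. $\partial^\ast_{s,t}(b)=b_{s-1,t}-b_{s-1,t+1}-b_{s,t-1}+b_{s,t}$. For $1\le k\le i$: $\Sigma^\ast_k(b)=\sum_{t=1}^k\partial^\ast_{t,i+1-t}(b)$; $m_i^\ast(b)$ is the smallest $k$ with $\Sigma_k^\ast(b)=\max_{1\le l\le i}\Sigma^\ast_l(b)$.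 $\widetilde f_i^\ast(b)=b+\sum_{t=1}^{m_i^\ast(b)}(\mathbf e_{t,i+1-t}-\mathbf e_{t-1,i+1-t})$. *)

(* Defs.v *)
From mathcomp Require Import all_boot all_order all_algebra.
Set Implicit Arguments. Unset Strict Implicit. Unset Printing Implicit Defensive.
Import Order.TTheory GRing.Theory Num.Theory.
Local Open Scope ring_scope.

(* Elements b = (b_{s,t}) are encoded as functions nat -> nat -> int that
   vanish outside the index set I(n) = {(s,t) : s,t >= 1, s+t <= n+1}
   (matching the convention b_{s,t} = 0 for (s,t) \notin I). *)

Definition inI (n s t : nat) : bool := [&& (0 < s)%N, (0 < t)%N & (s + t <= n.+1)%N].

Definition Binf (n : nat) (b : nat -> nat -> int) : Prop :=
  [/\ (forall s t, ~~ inI n s t -> b s t = 0),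
      (forall s t, inI n s t -> 0 <= b s t) &
      (forall k s, (1 <= k <= n)%N -> (1 <= s < k)%N ->
          b (s.+1) (k - s)%N <= b s (k.+1 - s)%N)].

Definition evec (n s t : nat) : nat -> nat -> int :=
  fun s' t' => if inI n s t && (s' == s) && (t' == t) then 1 else 0.

Definition dstar (b : nat -> nat -> int) (s t : nat) : int :=
  b s.-1 t - b s.-1 t.+1 - b s t.-1 + b s t.

Definition Sigma (i : nat) (b : nat -> nat -> int) (k : nat) : int :=
  \sum_(1 <= t < k.+1) dstar b t (i.+1 - t)%N.

Definition mstar (i : nat) (b : nat -> nat -> int) : nat :=
  let M := \big[Order.max/Sigma i b 1%N]_(1 <= l < i.+1) Sigma i b l in
  (find (fun l => Sigma i b l == M) (iota 1 i)).+1.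

Definition ftilde (n i : nat) (b : nat -> nat -> int) : nat -> nat -> int :=
  fun s t => b s t + \sum_(1 <= u < (mstar i b).+1)
                       (evec n u (i.+1 - u)%N s t - evec n u.-1 (i.+1 - u)%N s t).

(* Main.v *)
Require Import Defs.
From mathcomp Require Import all_boot all_order all_algebra zify.
Import Order.TTheory GRing.Theory Num.Theory.
Local Open Scope ring_scope.

Lemma sum_pick (a b x : nat) (c : int) :
  \sum_(a <= u < b) (if u == x then c else 0) = if (a <= x < b)%N then c else 0.
Proof.
rewrite -big_mkcond big_const_seq /=.
have -> : count (fun u => u == x) (index_iota a b) = (x \in index_iota a b).
  rewrite -(count_uniq_mem x (iota_uniq _ _)); by [].
rewrite mem_index_iota; case: (a <= x < b)%N => /=; by rewrite ?addr0.
Qed.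

Lemma ifand (a b : bool) : (if a then (if b then 1 else 0) else 0) = (if a && b then 1 else 0 : int).
Proof. by case: a. Qed.

Section S.
Variables (n i m : nat).
Definition delta (s' t' : nat) : int :=
  \sum_(1 <= u < m.+1) (evec n u (i.+1 - u)%N s' t' - evec n u.-1 (i.+1 - u)%N s' t').

Lemma delta_val s' t' : delta s' t' =
  (if [&& (1 <= s' <= m)%N, inI n s' (i.+1 - s')%N & t' == (i.+1 - s')%N] then 1 else 0)
  - (if [&& (s' < m)%N, inI n s' (i.+1 - s'.+1)%N & t' == (i.+1 - s'.+1)%N] then 1 else 0).
Proof.
rewrite /delta sumrB.
rewrite (eq_bigr (fun u => if u == s' then (if inI n s' (i.+1 - s')%N && (t' == (i.+1 - s')%N) then 1 else 0) else 0)); last first.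
  move=> u _; rewrite /evec; case: (eqVneq u s') => [->|ne]; first by rewrite andbT.
  by rewrite andbF.
rewrite [X in _ - X](@eq_big_nat _ _ _ 1 m.+1 _ (fun u => if u == s'.+1 then (if inI n s' (i.+1 - s'.+1)%N && (t' == (i.+1 - s'.+1)%N) then 1 else 0) else 0)); last first.
  move=> [|u] //= _; rewrite /evec eqSS; case: (eqVneq u s') => [->|ne] /=; first by rewrite andbT.
  by rewrite andbF.
rewrite !sum_pick.
by rewrite !ltnS /= !ifand.
Qed.
End S.

Definition Dv (m t : nat) : int :=
  (if (1 <= t <= m)%N then 1 else 0) + (if (1 <= t < m)%N then 1 else 0)
  - (if (2 <= t <= m)%N then 1 else 0) - (if (2 <= t <= m.+1)%N then 1 else 0).

Ltac decide_ifs := repeat match goal with |- context [if ?c then _ else _] =>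
  first [ have -> : c = true by rewrite /inI; lia | have -> : c = false by rewrite /inI; lia ] end.

Lemma dstar_delta n i m t : (1 <= t <= i)%N -> (i <= n)%N -> (1 <= m <= i)%N ->
  dstar (delta n i m) t (i.+1 - t) = Dv m t.
Proof.
move=> Ht Hi Hm.
rewrite /dstar !delta_val /Dv.
have C1 : (t = 1 \/ 2 <= t)%N by lia.
have C2 : (t < m \/ t = m \/ t = m.+1 \/ m.+1 < t)%N by lia.
case: C1 => H1; case: C2 => [H2|[H2|[H2|H2]]];
  decide_ifs; rewrite ?subr0 ?sub0r ?addr0 ?add0r //.
Qed.

Definition G (m s : nat) : int :=
  if s == 0%N then 0 else if (s < m)%N then 2 else if s == m then 1 else 0.

Lemma sumDv m s : (1 <= m)%N -> \sum_(1 <= t < s.+1) Dv m t = G m s.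
Proof.
move=> Hm; elim: s => [|s IH]; first by rewrite big_geq.
rewrite big_nat_recr //= IH /G /Dv.
have C2 : (s.+1 < m \/ s.+1 = m \/ s.+1 = m.+1 \/ m.+1 < s.+1)%N by lia.
have C1 : (s = 0 \/ 1 <= s)%N by lia.
case: C1 => H1; case: C2 => [H2|[H2|[H2|H2]]]; decide_ifs; rewrite ?subr0 ?sub0r ?addr0 ?add0r //.
Qed.

Lemma dstarD (b d : nat -> nat -> int) x y :
  dstar (fun s t => b s t + d s t) x y = dstar b x y + dstar d x y.
Proof. rewrite /dstar; lia. Qed.

Lemma Sigma_ft n i b s : (s <= i)%N -> (i <= n)%N -> (1 <= mstar i b <= i)%N ->
  Sigma i (ftilde n i b) s = Sigma i b s + G (mstar i b) s.
Proof.
move=> Hs Hi Hm.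
rewrite /Sigma.
rewrite (eq_bigr (fun t => dstar b t (i.+1 - t) + dstar (delta n i (mstar i b)) t (i.+1 - t))); last first.
  by move=> t _; rewrite -dstarD.
rewrite big_split /=; congr (_ + _).
rewrite -(sumDv (mstar i b) s); last lia.
apply: eq_big_nat => t Ht; apply: dstar_delta => //; lia.
Qed.

Lemma mstar_bound i b : (1 <= i)%N -> (1 <= mstar i b <= i)%N.
Proof.
move=> Hi; rewrite /mstar /=.
set M := \big[Order.max/Sigma i b 1%N]_(1 <= l < i.+1) Sigma i b l.
have HM : M \in [seq Sigma i b l | l <- iota 1 i].
  rewrite /M big_seq; apply: (big_ind (fun v => v \in [seq Sigma i b l | l <- iota 1 i])).
  - apply: map_f; rewrite mem_iota; lia.
  - by move=> x y Hx Hy; case: (leP x y) => _.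
  - by move=> l Hl; apply: map_f; rewrite mem_index_iota in Hl *; rewrite mem_iota; lia.
have : has (fun l => Sigma i b l == M) (iota 1 i).
  case/mapP: HM => l Hl ->; apply/hasP; exists l => //.
by rewrite has_find size_iota.
Qed.

Theorem lemma6p5 (n i : nat) (b : nat -> nat -> int) :
  (1 <= i <= n)%N -> Binf n b ->
  [/\ (mstar i b = 1%N ->
         forall s : nat, (1 <= s <= i)%N ->
           Sigma i (ftilde n i b) s = Sigma i b s + (if s == 1%N then 1 else 0)),
      (forall k : nat, (2 <= k)%N -> mstar i b = k ->
         forall s : nat, (1 <= s <= i)%N ->
           Sigma i (ftilde n i b) s =
             Sigma i b s + (if (s < k)%N then 2 else if s == k then 1 else 0)) &
      Sigma i (ftilde n i b) (mstar i b) = Sigma i b (mstar i b) + 1].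
Proof.
move=> /andP[Hi1 Hin] _.
have Hm := @mstar_bound i b Hi1.
split.
- move=> Hm1 s Hs; rewrite Sigma_ft //; last lia.
  congr (_ + _); rewrite /G Hm1; decide_ifs; done.
- move=> k Hk Hmk s Hs; rewrite Sigma_ft //; last lia.
  congr (_ + _); rewrite /G Hmk; decide_ifs; done.
- rewrite Sigma_ft //.
  congr (_ + _); rewrite /G; decide_ifs; done.
Qed.
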